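(* Let $U^{(n)}$ be uniformly distributed on $\{1,\dots,n\}$ and put $\widetilde U^{(n)}:=\prod_{p\le n,\ p\ \text{prime}}p^{\mathbbm{1}_{\{\lambda_p(U^{(n)})\ge1\}}}$. Then, as $n\to\infty$, $$\mathbb{E}\bigl(\log U^{(n)}-\log\widetilde U^{(n)}\bigr)^4=O(1)$$ and $$\mathbb{E}\bigl(\log U^{(n)}-\log\widetilde U^{(n)}-\mathbb{E}\log U^{(n)}+\mathbb{E}\log\widetilde U^{(n)}\bigr)^4=O(1).$$
   Context: For a prime $p$ and $k\in\mathbb{N}$, $\lambda_p(k)$ is the exponent of $p$ in the prime factorization of $k$, i.e. $k=\prod_p p^{\lambda_p(k)}$. *)

(* Defs.v *)
From mathcomp Require Import all_boot all_order all_algebra.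
From mathcomp Require Import reals exp.
Set Implicit Arguments. Unset Strict Implicit. Unset Printing Implicit Defensive.
Import Order.TTheory GRing.Theory Num.Theory.
Local Open Scope ring_scope.

Definition lambda (p k : nat) : nat := logn p k.

(* tilde U^(n) as a function of the value k of U^(n):
   prod_{p <= n, p prime} p ^ 1_{lambda_p k >= 1} *)
Definition Utilde (n k : nat) : nat :=
  (\prod_(0 <= p < n.+1 | prime p) p ^ (1 <= lambda p k))%N.

(* Expectation of f(U^(n)) for U^(n) uniform on {1,...,n} *)
Definition Eunif (R : realType) (n : nat) (f : nat -> R) : R :=
  n%:R^-1 * \sum_(1 <= k < n.+1) f k.

(* Main.v *)
Require Import Defs.
From mathcomp Require Import all_boot all_order all_algebra.
From mathcomp Require Import reals exp.
From mathcomp Require Import ring lra.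
Set Implicit Arguments. Unset Strict Implicit.
Import Order.TTheory GRing.Theory Num.Theory.

Module NatPart.
Local Open Scope nat_scope.
Definition Bsq (n k : nat) : nat :=
  \prod_(0 <= p < n.+1 | prime p) p ^ (logn p k)./2.

Lemma prodk n k : 0 < k <= n ->
  k = \prod_(0 <= p < n.+1 | prime p) p ^ logn p k.
Proof.
case/andP=> k0 kn; rewrite -{1}(partnT k0) (widen_partn _ kn).
rewrite big_mkcond [RHS]big_mkcond /=; apply: eq_bigr => p _.
case: (boolP (prime p)) => // np.
by rewrite lognE (negbTE np).
Qed.

Lemma dvd_prod_le n (F G : nat -> nat) :
  (forall p, prime p -> F p %| G p) ->
  \prod_(0 <= p < n.+1 | prime p) F p %| \prod_(0 <= p < n.+1 | prime p) G p.
Proof.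
move=> H; apply: (big_ind2 (fun a b => a %| b)) => //.
by move=> ? ? ? ? ? ?; apply: dvdn_mul.
Qed.

Lemma Ut_dvd n k : 0 < k <= n -> Utilde n k %| k.
Proof.
move=> hk; rewrite [X in _ %| X](prodk hk) /Utilde /lambda.
apply: dvd_prod_le => p pp; apply: dvdn_exp2l.
by case: (logn p k).
Qed.

Lemma prod_sq n (F : nat -> nat) :
  (\prod_(0 <= p < n.+1 | prime p) F p) ^ 2 = \prod_(0 <= p < n.+1 | prime p) F p ^ 2.
Proof. by rewrite expnS expn1 -big_split /=; apply: eq_bigr => p _; rewrite expnS expn1. Qed.

Lemma Bsq_dvd n k : 0 < k <= n -> Bsq n k ^ 2 %| k.
Proof.
move=> hk; rewrite [X in _ %| X](prodk hk) /Bsq.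
rewrite prod_sq.
apply: dvd_prod_le => p pp; rewrite -expnM; apply: dvdn_exp2l.
by rewrite muln2 -{2}(odd_double_half (logn p k)) leq_addl.
Qed.

Lemma k_dvd n k : 0 < k <= n -> k %| Utilde n k * Bsq n k ^ 2.
Proof.
move=> hk; rewrite [X in X %| _](prodk hk) /Bsq /Utilde /lambda.
rewrite prod_sq -big_split /=.
apply: dvd_prod_le => p pp; rewrite -expnM -expnD; apply: dvdn_exp2l.
rewrite muln2 -{1}(odd_double_half (logn p k)).
case: (logn p k) => [|v] //=.
by rewrite leq_add2r; case: (odd v).
Qed.

Lemma Ut_gt0 n k : 0 < Utilde n k.
Proof.
rewrite /Utilde; apply: (big_ind (fun x => 0 < x)) => //.
  by move=> a b; rewrite muln_gt0 => -> ->.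
by move=> p pp; rewrite expn_gt0 prime_gt0.
Qed.

Lemma Bsq_gt0 n k : 0 < Bsq n k.
Proof.
rewrite /Bsq; apply: (big_ind (fun x => 0 < x)) => //.
  by move=> a b; rewrite muln_gt0 => -> ->.
by move=> p pp; rewrite expn_gt0 prime_gt0.
Qed.

Lemma Bsq_le n k : 0 < k <= n -> Bsq n k <= n.
Proof.
move=> hk; have := Bsq_dvd hk; move/(dvdn_leq (elimT andP hk).1) => h.
case/andP: hk => _ kn; apply: leq_trans kn; apply: leq_trans h.
by rewrite expnS expn1 leq_pmulr // Bsq_gt0.
Qed.

Lemma count_dvd m n : 0 < m -> \sum_(1 <= k < n.+1) (m %| k) = n %/ m.
Proof.
move=> m0; elim: n => [|n IH]; first by rewrite big_geq // div0n.
by rewrite big_nat_recr //= IH divnS // addnC.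
Qed.
End NatPart.
Import NatPart.
Local Open Scope ring_scope.
Section Real.
Variable R : realType.

Lemma pow4_le (x y : R) : 0 <= x -> x <= y -> x ^+ 4 <= y ^+ 4.
Proof. move=> x0 xy; apply: lerXn2r; rewrite ?nnegrE //; exact: le_trans xy. Qed.

Lemma ln4_bound (x : R) : 1 <= x -> ln x ^+ 4 <= 4096 * Num.sqrt x.
Proof.
move=> x1.
have x0 : 0 < x by apply: lt_le_trans x1.
set t := Num.sqrt (Num.sqrt (Num.sqrt x)).
have t0 : 0 < t by rewrite !sqrtr_gt0.
have t2 : t ^+ 2 = Num.sqrt (Num.sqrt x) by rewrite sqr_sqrtr // sqrtr_ge0.
have t4 : t ^+ 4 = Num.sqrt x.
  by rewrite (_ : 4 = 2 * 2)%N // exprM t2 sqr_sqrtr // sqrtr_ge0.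
have t8 : t ^+ 8 = x.
  by rewrite (_ : 8 = 4 * 2)%N // exprM t4 sqr_sqrtr // ltW.
have lt : ln t <= t - 1.
  have := @le_ln1Dx R (t - 1); rewrite addrCA subrr addr0; apply; lra.
have lx : ln x = 8 * ln t by rewrite -t8 lnXn // mulr_natl.
rewrite -t4 (_ : 4096 * t ^+ 4 = (8 * t) ^+ 4); last by rewrite exprMn -natrX.
apply: pow4_le; first exact: ln_ge0.
rewrite lx; lra.
Qed.

Lemma sqrt_sum n : (1 <= n)%N ->
  \sum_(1 <= d < n.+1) Num.sqrt (d%:R : R) / (d%:R ^+ 2) <= 3 - 2 / Num.sqrt (n%:R).
Proof.
elim: n => [//|n IH] _.
rewrite big_nat_recr //=.
case: n IH => [|n] IH.
  by rewrite big_geq // add0r sqrtr1 expr1n !divr1; lra.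
have {}IH := IH isT.
set a := Num.sqrt (n.+1%:R : R) in IH *.
set b := Num.sqrt (n.+2%:R : R).
have a0 : 0 < a by rewrite sqrtr_gt0 ltr0n.
have b0 : 0 < b by rewrite sqrtr_gt0 ltr0n.
have ea : a ^+ 2 = n.+1%:R by rewrite sqr_sqrtr.
have eb : b ^+ 2 = n.+2%:R by rewrite sqr_sqrtr.
have eab : b ^+ 2 = a ^+ 2 + 1 by rewrite ea eb -natr1.
have ab : a <= b by rewrite ler_sqrt ?ler_nat ?ltr0n.
rewrite -eb.
suff : b / b ^+ 2 ^+ 2 + 2 / b <= 2 / a by lra.
have key : 0 <= 2 * b ^+ 3 - a - 2 * a * b ^+ 2.
  have h1 : (b - a) * (b + a) = 1 by rewrite mulrDr !mulrBl; lra.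
  nra.
rewrite -subr_ge0.
have -> : 2 / a - (b / b ^+ 2 ^+ 2 + 2 / b) = (2 * b ^+ 3 - a - 2 * a * b ^+ 2) / (a * b ^+ 3).
  by field; rewrite ?gt_eqF.
apply: divr_ge0 => //; apply: mulr_ge0; [exact: ltW | exact/exprn_ge0/ltW].
Qed.

Definition X n k : R := ln (k%:R : R) - ln ((Utilde n k)%:R).

Lemma X_bounds n k : (0 < k <= n)%N ->
  0 <= X n k /\ X n k <= 2 * ln ((Bsq n k)%:R : R).
Proof.
move=> hk; have k0 : (0 < k)%N by case/andP: hk.
have U0 := Ut_gt0 n k; have B0 := Bsq_gt0 n k.
have Uk : (Utilde n k <= k)%N by apply: dvdn_leq => //; exact: Ut_dvd.
have kU : (k <= Utilde n k * Bsq n k ^ 2)%N.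
  by apply: dvdn_leq; [rewrite muln_gt0 U0 expn_gt0 B0 | exact: k_dvd].
rewrite /X; split.
  by rewrite subr_ge0 ler_ln ?posrE ?ltr0n // ler_nat.
rewrite lerBlDl mulr_natl -lnXn ?ltr0n // -lnM ?posrE ?exprn_gt0 ?ltr0n //.
by rewrite ler_ln ?posrE ?mulr_gt0 ?exprn_gt0 ?ltr0n // -natrX -natrM ler_nat.
Qed.

Lemma count_dvdR m n : (0 < m)%N ->
  \sum_(1 <= k < n.+1) ((m %| k)%N%:R : R) <= n%:R / m%:R.
Proof.
move=> m0; rewrite -natr_sum count_dvd // ler_pdivlMr ?ltr0n //.
by rewrite -natrM ler_nat leq_divM.
Qed.

Lemma sum4 n : \sum_(1 <= k < n.+1) X n k ^+ 4 <= 16 * 4096 * 3 * n%:R.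
Proof.
case: n => [|n]; first by rewrite big_geq // mulr0.
set N := n.+1.
apply: (@le_trans _ _ (\sum_(1 <= k < N.+1) \sum_(1 <= d < N.+1)
     ((d ^ 2 %| k)%N%:R * (16 * ln (d%:R : R) ^+ 4)))).
  rewrite big_nat [X in _ <= X]big_nat; apply: ler_sum => k hk.
  have [X0 X1] := X_bounds hk.
  have hB : (Bsq N k \in index_iota 1 N.+1).
    rewrite mem_index_iota Bsq_gt0 ltnS; exact: Bsq_le.
  rewrite (bigD1_seq _ hB (iota_uniq _ _)) /= Bsq_dvd // mul1r.
  rewrite -[X in X <= _]addr0; apply: lerD; last first.
    apply: sumr_ge0 => d _; apply: mulr_ge0 => //; apply: mulr_ge0 => //.
    by apply: exprn_even_ge0.
  apply: le_trans (pow4_le X0 X1) _.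
  by rewrite exprMn -natrX.
rewrite exchange_big_nat /=.
apply: (@le_trans _ _ (\sum_(1 <= d < N.+1)
     (16 * 4096 * N%:R * (Num.sqrt (d%:R : R) / d%:R ^+ 2)))).
  rewrite big_nat [X in _ <= X]big_nat; apply: ler_sum => d /andP[d1 _].
  rewrite -mulr_suml mulrC.
  have hc : \sum_(1 <= k < N.+1) ((d ^ 2 %| k)%N%:R : R) <= N%:R / (d ^ 2)%:R.
    by apply: count_dvdR; rewrite expn_gt0 d1.
  have hl := @ln4_bound (d%:R : R).
  rewrite ler1n in hl; have {}hl := hl d1.
  rewrite natrX in hc.
  rewrite (_ : 16 * 4096 * N%:R * (Num.sqrt d%:R / d%:R ^+ 2) =
     (16 * (4096 * Num.sqrt d%:R)) * (N%:R / d%:R ^+ 2)); last first.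
    by rewrite /N; ring.
  apply: ler_pM => //.
  - by apply: mulr_ge0 => //; apply: exprn_even_ge0.
  - by apply: sumr_ge0 => i _.
  - by apply: ler_pM => //; apply: exprn_even_ge0.
rewrite -mulr_sumr.
have := sqrt_sum (isT : (1 <= N)%N).
have : 0 <= 2 / Num.sqrt (N%:R : R) by apply: divr_ge0; rewrite ?sqrtr_ge0.
move=> h1 h2.
have -> : 16 * 4096 * 3 * (N%:R : R) = 16 * 4096 * N%:R * 3 by ring.
apply: ler_wpM2l; first by rewrite !mulr_ge0.
lra.
Qed.


Definition C1 : R := 16 * 4096 * 3.

Lemma C1_ge0 : 0 <= C1. Proof. by rewrite /C1 !mulr_ge0. Qed.

Lemma E4 n : (1 <= n)%N -> 0 <= Eunif n (fun k => X n k ^+ 4) <= C1.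
Proof.
move=> n1; have n0 : 0 < (n%:R : R) by rewrite ltr0n.
rewrite /Eunif; apply/andP; split.
  by apply: mulr_ge0; [rewrite invr_ge0 ltW | apply: sumr_ge0 => k _; apply: exprn_even_ge0].
rewrite mulrC ler_pdivrMr //; exact: sum4.
Qed.

Lemma E1 n : (1 <= n)%N -> 0 <= Eunif n (X n) <= C1 + 1.
Proof.
move=> n1; have n0 : 0 < (n%:R : R) by rewrite ltr0n.
have xb : forall k, (1 <= k < n.+1)%N -> 0 <= X n k /\ X n k <= X n k ^+ 4 + 1.
  move=> k hk; have [h _] : 0 <= X n k /\ _ := X_bounds (k:=k) (n:=n) hk.
  split => //; set x := X n k in h *.
  have e4 : x ^+ 4 = (x * x) * (x * x) by rewrite (_ : 4 = 2 * 2)%N // exprM expr2.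
  rewrite e4; case: (lerP x 1) => hx.
    have : 0 <= (x * x) * (x * x) by apply: mulr_ge0; apply: mulr_ge0.
    lra.
  have h2 : x <= x * x by nra.
  have : x * x <= (x * x) * (x * x) by nra.
  lra.
rewrite /Eunif; apply/andP; split.
  apply: mulr_ge0; first by rewrite invr_ge0 ltW.
  by rewrite big_nat; apply: sumr_ge0 => k hk; case: (xb k hk).
rewrite mulrC ler_pdivrMr //.
apply: (@le_trans _ _ (\sum_(1 <= k < n.+1) (X n k ^+ 4 + 1))).
  by rewrite !big_nat; apply: ler_sum => k hk; case: (xb k hk).
rewrite big_split /= sumr_const_nat subn1 /= mulrDl mul1r.
apply: lerD; [exact: sum4 | idtac]. 
by [].
Qed.

Lemma pow4_shift (x c : R) : 0 <= x -> 0 <= c -> (x - c) ^+ 4 <= 2 * x ^+ 4 + 2 * c ^+ 4.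
Proof.
move=> x0 c0.
have h1 : (x - c) ^+ 2 <= x ^+ 2 + c ^+ 2 by nra.
have h2 : (x - c) ^+ 4 <= (x ^+ 2 + c ^+ 2) ^+ 2.
  rewrite (_ : 4 = 2 * 2)%N // exprM; apply: lerXn2r; rewrite ?nnegrE ?exprn_even_ge0 //.
  by rewrite addr_ge0 ?exprn_even_ge0.
have h3 : (x ^+ 2 + c ^+ 2) ^+ 2 <= 2 * x ^+ 4 + 2 * c ^+ 4.
  have : 0 <= (x ^+ 2 - c ^+ 2) ^+ 2 by apply: exprn_even_ge0.
  rewrite (_ : 4 = 2 * 2)%N // !exprM; nra.
lra.
Qed.

End Real.


Theorem lemma5p3 (R : realType) :
  (exists C : R, exists N : nat, forall n : nat, (N <= n)%N ->
     `| Eunif n (fun k => (ln (k%:R : R) - ln ((Utilde n k)%:R)) ^+ 4) | <= C)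
  /\
  (exists C : R, exists N : nat, forall n : nat, (N <= n)%N ->
     `| Eunif n (fun k => (ln (k%:R : R) - ln ((Utilde n k)%:R)
                          - Eunif n (fun j => ln (j%:R : R))
                          + Eunif n (fun j => ln ((Utilde n j)%:R : R))) ^+ 4) | <= C).
Proof.
split.
  exists (C1 R), 1%N => n n1.
  have /andP[h0 h1] := E4 R n1.
  by rewrite ger0_norm.
exists (2 * C1 R + 2 * (C1 R + 1) ^+ 4), 1%N => n n1.
have n0 : 0 < (n%:R : R) by rewrite ltr0n.
set c := Eunif n (fun j => ln (j%:R : R)) - Eunif n (fun j => ln ((Utilde n j)%:R : R)).
have ec : c = Eunif n (X R n).
  by rewrite /c /Eunif -mulrBr -sumrB.
have /andP[c0 c1] := E1 R n1; rewrite -ec in c0 c1.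
have /andP[h0 h1] := E4 R n1.
have pt : forall k, (1 <= k < n.+1)%N ->
    0 <= (ln (k%:R : R) - ln ((Utilde n k)%:R)
           - Eunif n (fun j => ln (j%:R : R))
           + Eunif n (fun j => ln ((Utilde n j)%:R : R))) ^+ 4 <=
    2 * X R n k ^+ 4 + 2 * c ^+ 4.
  move=> k hk; rewrite exprn_even_ge0 //=.
  have [x0 _] := X_bounds R hk.
  rewrite (_ : _ - _ - _ + _ = X R n k - c); last by rewrite /c /X; ring.
  exact: pow4_shift.
rewrite ger0_norm; last first.
  apply: mulr_ge0; first by rewrite invr_ge0 ltW.
  rewrite big_nat; apply: sumr_ge0 => k hk; case/andP: (pt k hk) => h _; exact: h.
apply: (@le_trans _ _ (Eunif n (fun k => 2 * X R n k ^+ 4 + 2 * c ^+ 4))).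
  apply: ler_wpM2l; first by rewrite invr_ge0 ltW.
  rewrite [X in _ <= X]big_nat [X in X <= _]big_nat; apply: ler_sum => k hk; case/andP: (pt k hk) => _ h; exact: h.
rewrite /Eunif big_split /= -mulr_sumr sumr_const_nat subn1 /= mulrDr.
have -> : n%:R^-1 * (2 * c ^+ 4 *+ n) = 2 * c ^+ 4.
  by field; rewrite gt_eqF.
rewrite mulrCA.
apply: lerD.
  by apply: ler_wpM2l => //; rewrite /Eunif in h1.
apply: ler_wpM2l => //; apply: lerXn2r; rewrite ?nnegrE //.
by apply: addr_ge0 => //; exact: C1_ge0.
Qed.
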